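(* Let $\hat a,\hat b,\hat c,\hat d\in\hat{\mathbb Q}$ and suppose there exists $\hat q\in\hat{\mathbb U}$ such that $\hat a\hat q=\hat q\hat b$ and $\hat c\hat q=\hat q\hat d$. Suppose $\hat a=\hat x^*\hat\lambda\hat x$ and $\hat b=\hat y^*\hat\lambda\hat y$, where $\hat x,\hat y\in\hat{\mathbb U}$, $\hat\lambda\in\mathbb{DC}$ and the standard part of $\hat\lambda$ is not a real number. Write $\hat x\hat c\hat x^*=c_1+c_2 j+(c_3+c_4 j)\varepsilon$ and $\hat y\hat d\hat y^*=d_1+d_2 j+(d_3+d_4 j)\varepsilon$ with $c_t,d_t\in\mathbb C$. If $c_2\neq0$, then there are exactly two unit dual quaternions $\hat q$ satisfying both equations, they differ only by sign, and they are $$\hat q=\pm\,\hat x^*\Big(\overline{\sqrt{\tfrac{d_2}{c_2}}}+\frac{\overline{c_2d_4}-\overline{d_2c_4}}{2\,\overline{c_2}^{\,2}}\,\overline{\sqrt{\tfrac{c_2}{d_2}}}\,\varepsilon\Big)\hat y.$$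
   Context: $\mathbb{Q}$ denotes the real quaternions with units $i,j,k$; complex numbers are identified with quaternions $a+bi$, so every quaternion is uniquely $z_1+z_2 j$ with $z_1,z_2\in\mathbb C$. $\varepsilon$ satisfies $\varepsilon\ne0$, $\varepsilon^2=0$ and commutes with quaternions. $\hat{\mathbb Q}$ is the set of dual quaternions $\tilde p_{st}+\tilde p_{\mathcal I}\varepsilon$ ($\tilde p_{st}$ the standard part), with conjugate $\hat p^*=\tilde p_{st}^*+\tilde p_{\mathcal I}^*\varepsilon$. $\mathbb{DC}$ is the set of dual complex numbers $a+b\varepsilon$, $a,b\in\mathbb C$. $\hat{\mathbb U}$ is the set of unit dual quaternions, i.e. $\hat p$ with $|\hat p|=1$, where $|\hat p|=|\tilde p_{st}|+\frac{\mathrm{sc}(\tilde p_{st}^*\tilde p_{\mathcal I})}{|\tilde p_{st}|}\varepsilon$ for $\tilde p_{st}\ne0$, $\mathrm{sc}(\tilde p)=\frac12(\tilde p+\tilde p^* )$; equivalently $\hat p^*\hat p=\hat p\hat p^*=1$. In the formula, $\sqrt{d_2/c_2}$ is a complex square root and $\sqrt{c_2/d_2}$ denotes its reciprocal; bars denote complex conjugation. *)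

(* Defs.v *)
(* Real quaternions over an arbitrary real closed field R
   (e.g. the reals), modelled via the Cayley-Dickson decomposition
   q = z1 + z2 j with z1, z2 in C = R[i] (the complex numbers over R). *)
From HB Require Import structures.
From mathcomp Require Import all_boot all_order all_algebra.
From mathcomp Require Import complex.
Set Implicit Arguments.
Unset Strict Implicit.
Unset Printing Implicit Defensive.
Import Order.TTheory GRing.Theory Num.Theory.
Local Open Scope ring_scope.

Section Quat.
Variable R : rcfType.
Local Notation C := (R[i]).

Record quat := Quat { qc1 : C; qc2 : C }.

Definition qadd (p q : quat) := Quat (qc1 p + qc1 q) (qc2 p + qc2 q).
Definition qopp (p : quat) := Quat (- qc1 p) (- qc2 p).
(* (z1 + z2 j)(w1 + w2 j) = (z1 w1 - z2 conj w2) + (z1 w2 + z2 conj w1) j,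
   using j w = (conj w) j and j^2 = -1 *)
Definition qmul (p q : quat) :=
  Quat (qc1 p * qc1 q - qc2 p * Num.conj (qc2 q))
       (qc1 p * qc2 q + qc2 p * Num.conj (qc1 q)).
Definition qconj (p : quat) := Quat (Num.conj (qc1 p)) (- qc2 p).
Definition qzero := Quat 0 0.
Definition qone := Quat 1 0.
Definition qofC (z : C) := Quat z 0.

(* dual quaternion  st + inf * eps *)
Record dquat := DQuat { dst : quat; dinf : quat }.

Definition dqadd (p q : dquat) := DQuat (qadd (dst p) (dst q)) (qadd (dinf p) (dinf q)).
Definition dqopp (p : dquat) := DQuat (qopp (dst p)) (qopp (dinf p)).
(* eps^2 = 0, eps commutes with quaternions *)
Definition dqmul (p q : dquat) :=
  DQuat (qmul (dst p) (dst q))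
        (qadd (qmul (dst p) (dinf q)) (qmul (dinf p) (dst q))).
Definition dqconj (p : dquat) := DQuat (qconj (dst p)) (qconj (dinf p)).
Definition dqone := DQuat qone qzero.

Definition dqofDC (a b : C) := DQuat (qofC a) (qofC b).

Definition dq_unit (p : dquat) : Prop :=
  dqmul (dqconj p) p = dqone /\ dqmul p (dqconj p) = dqone.

End Quat.

(* Main.v *)
Require Import Defs.
From HB Require Import structures.
From mathcomp Require Import all_boot all_order all_algebra.
From mathcomp Require Import complex ring.
Import Order.TTheory GRing.Theory Num.Theory.
Local Open Scope ring_scope.
Section S.
Variable R : rcfType.
Local Notation C := (R[i]).
Lemma cD (a b : C) : (a + b)^* = a^* + b^*. Proof. exact: rmorphD. Qed.
Lemma cB (a b : C) : (a - b)^* = a^* - b^*. Proof. exact: rmorphB. Qed.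
Lemma cN (a : C) : (- a)^* = - a^*. Proof. exact: rmorphN. Qed.
Lemma cM (a b : C) : (a * b)^* = a^* * b^*. Proof. exact: rmorphM. Qed.
Lemma c0 : (0 : C)^* = 0. Proof. exact: rmorph0. Qed.
Lemma c1 : (1 : C)^* = 1. Proof. exact: rmorph1. Qed.
Lemma cK (a : C) : a^*^* = a. Proof. exact: conjCK. Qed.
Ltac csimp := rewrite ?(cD, cB, cN, cM, cK, c0, c1).
Ltac dq := repeat match goal with [p : dquat _ |- _] => destruct p end;
  repeat match goal with [p : quat _ |- _] => destruct p end;
  rewrite /dqmul /dqconj /dqopp /dqone /dqadd /qmul /qconj /qadd /qopp /qone /qzero /=;
  congr (DQuat (Quat _ _) (Quat _ _)); csimp; ring.
Lemma dqmulA (p q r : dquat R) : dqmul p (dqmul q r) = dqmul (dqmul p q) r.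
Proof. repeat match goal with [p : dquat _ |- _] => destruct p end;
  repeat match goal with [p : quat _ |- _] => destruct p end;
  rewrite /dqmul /dqconj /dqopp /dqone /dqadd /qmul /qconj /qadd /qopp /qone /qzero /=.
  congr (DQuat (Quat _ _) (Quat _ _)); csimp; ring. Qed.
Lemma dqconjM (p q : dquat R) : dqconj (dqmul p q) = dqmul (dqconj q) (dqconj p).
Proof. dq. Qed.
Lemma dqmul1 (p : dquat R) : dqmul (dqone R) p = p.
Proof. dq. Qed.
Lemma dqmulr1 (p : dquat R) : dqmul p (dqone R) = p.
Proof. dq. Qed.
Lemma dqmulN (p q : dquat R) : dqmul p (dqopp q) = dqopp (dqmul p q).
Proof. dq. Qed.
Lemma dqNmul (p q : dquat R) : dqmul (dqopp p) q = dqopp (dqmul p q).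
Proof. dq. Qed.
Lemma dqoppK (p : dquat R) : dqopp (dqopp p) = p.
Proof. dq. Qed.
Lemma dqconjN (p : dquat R) : dqconj (dqopp p) = dqopp (dqconj p).
Proof. dq. Qed.
Lemma dqconjK (p : dquat R) : dqconj (dqconj p) = p.
Proof. dq. Qed.
Lemma cV (a : C) : (a^-1)^* = (a^*)^-1. Proof. exact: fmorphV. Qed.
Lemma cX (a : C) : (a ^+ 2)^* = (a^*) ^+ 2. Proof. exact: rmorphXn. Qed.

Lemma alg (u v c2 c4 d2 d4 : C) :
  u^* * u = 1 -> u^* * v + v^* * u = 0 -> c2 * u^* = u * d2 ->
  c2 * v^* + c4 * u^* = u * d4 + v * d2 -> c2 != 0 ->
  let s := sqrtC (d2 / c2) in
  let V0 := ((c2 * d4)^* - (d2 * c4)^*) / (2 * c2^* ^+ 2) * (s^-1)^* in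
  (u = s^* /\ v = V0) \/ (u = - s^* /\ v = - V0).
Proof.
move=> h1 h2 h3 h4 hc2 s V0.
have h3c : c2^* * u = u^* * d2^* by rewrite -(cK u) -!cM h3 cK mulrC.
have h4c : c2^* * v + c4^* * u = u^* * d4^* + v^* * d2^*.
  by rewrite -(cK u) -(cK v) -!cM -!cD h4 cK cK.
have C2nz : c2^* != 0 by rewrite conjC_eq0.
have unz : u != 0 by apply/eqP => u0; move: h1; rewrite u0 mulr0 => /eqP; rewrite eq_sym oner_eq0.
have uinv : u^-1 = u^* by apply: (mulfI unz); rewrite mulfV // mulrC h1.
have Hu2 : u ^+ 2 = s^* ^+ 2.
  rewrite -cX sqrtCK cM cV.
  apply: (mulIf C2nz); rewrite mulfVK //.
  by rewrite expr2 -mulrA (mulrC u (c2^*)) h3c mulrA (mulrC u) h1 mul1r.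
have E1 : u * u^* - 1 = 0 by rewrite mulrC h1 subrr.
have E2 : u^* * v + v^* * u = 0 by [].
have E3 : c2^* * u - u^* * d2^* = 0 by rewrite h3c subrr.
have E4 : c2^* * v + c4^* * u - u^* * d4^* - v^* * d2^* = 0 by rewrite h4c; ring.
have HG : v * (2 * c2^* ^+ 2) - (c2^* * d4^* - d2^* * c4^*) * u^* =
  c2^* * ((c2^* * v + c4^* * u - u^* * d4^* - v^* * d2^*)
          + d2^* * u^* * (u^* * v + v^* * u) - c2^* * v * (u * u^* - 1)
          + u^* * v * (c2^* * u - u^* * d2^*) - v^* * d2^* * (u * u^* - 1))
  - c4^* * (c2^* * u - u^* * d2^*) by ring.
rewrite E1 E2 E3 E4 in HG.
have Hv : v * (2 * c2^* ^+ 2) = (c2^* * d4^* - d2^* * c4^*) * u^*.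
  by apply/eqP; rewrite -subr_eq0 HG; apply/eqP; ring.
have dnz : (2 * c2^* ^+ 2) != 0 by rewrite mulf_eq0 negb_or pnatr_eq0 expf_eq0 (negbTE C2nz) andbF.
have Hv' : v = (c2^* * d4^* - d2^* * c4^*) / (2 * c2^* ^+ 2) * u^*.
  by rewrite -[LHS](mulfK dnz) Hv mulrAC.
have : (u - s^*) * (u + s^*) = 0 by rewrite -subr_sqr Hu2 subrr.
move/eqP; rewrite mulf_eq0 => /orP [/eqP H | /eqP H].
- have us : u = s^* by apply/eqP; rewrite -subr_eq0 H.
  left; split => //.
  by rewrite Hv' /V0 !cM cV -us uinv.
- have us : u = - s^* by rewrite -(subr0 u) -H opprD addrA subrr add0r.
  right; split => //.
  rewrite Hv' /V0 !cM cV.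
  have -> : s^* = - u by rewrite us opprK.
  by rewrite invrN uinv mulrN opprK.
Qed.

Lemma canR (x P : dquat R) : dq_unit x -> dqmul (dqmul P (dqconj x)) x = P.
Proof. by case=> h1 h2; rewrite -dqmulA h1 dqmulr1. Qed.
Lemma canR' (x P : dquat R) : dq_unit x -> dqmul (dqmul P x) (dqconj x) = P.
Proof. by case=> h1 h2; rewrite -dqmulA h2 dqmulr1. Qed.

Ltac zsimp := rewrite ?(c0, c1, oppr0, mul0r, mulr0, addr0, add0r, subr0, sub0r).

Lemma key (a b c d x y q : dquat R) (l li : C) :
  dq_unit q -> dqmul a q = dqmul q b -> dqmul c q = dqmul q d ->
  dq_unit x -> dq_unit y -> l \notin Num.real ->
  a = dqmul (dqmul (dqconj x) (dqofDC l li)) x ->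
  b = dqmul (dqmul (dqconj y) (dqofDC l li)) y ->
  let c2 := qc2 (dst (dqmul (dqmul x c) (dqconj x))) in
  let c4 := qc2 (dinf (dqmul (dqmul x c) (dqconj x))) in
  let d2 := qc2 (dst (dqmul (dqmul y d) (dqconj y))) in
  let d4 := qc2 (dinf (dqmul (dqmul y d) (dqconj y))) in
  c2 != 0 ->
  let s := sqrtC (d2 / c2) in
  let q0 := dqmul (dqmul (dqconj x)
              (dqofDC (Num.conj s)
                 ((Num.conj (c2 * d4) - Num.conj (d2 * c4))
                    / (2 * Num.conj c2 ^+ 2) * Num.conj (s^-1)))) y in
  q = q0 \/ q = dqopp q0.
Proof.
move=> Uq Eab Ecd Ux Uy Hl Ha Hb c2 c4 d2 d4 Hc2 s q0.
have La : dqmul (dqmul x a) (dqconj x) = dqofDC l li.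
  by rewrite Ha !dqmulA canR' // Ux.2 dqmul1.
have Lb : dqmul (dqmul y b) (dqconj y) = dqofDC l li.
  by rewrite Hb !dqmulA canR' // Uy.2 dqmul1.
have Hq : q = dqmul (dqmul (dqconj x) (dqmul (dqmul x q) (dqconj y))) y.
  by rewrite !dqmulA canR // Ux.1 dqmul1.
have HLp : dqmul (dqofDC l li) (dqmul (dqmul x q) (dqconj y)) =
           dqmul (dqmul (dqmul x q) (dqconj y)) (dqofDC l li).
  rewrite -{1}La -Lb !dqmulA !canR //.
  by rewrite -(dqmulA x a q) Eab dqmulA.
have HCp : dqmul (dqmul (dqmul x c) (dqconj x)) (dqmul (dqmul x q) (dqconj y)) =
           dqmul (dqmul (dqmul x q) (dqconj y)) (dqmul (dqmul y d) (dqconj y)).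
  rewrite !dqmulA !canR //.
  by rewrite -(dqmulA x c q) Ecd dqmulA.
have Hup : dqmul (dqconj (dqmul (dqmul x q) (dqconj y))) (dqmul (dqmul x q) (dqconj y)) = dqone R.
  rewrite !dqconjM dqconjK !dqmulA canR //.
  by rewrite -(dqmulA y) Uq.1 dqmulr1 Uy.2.
move: Hc2 HCp @s @q0; rewrite /c2 /c4 /d2 /d4.
case: (dqmul (dqmul x c) (dqconj x)) => [[k1 k2] [k3 k4]].
case: (dqmul (dqmul y d) (dqconj y)) => [[e1 e2] [e3 e4]] /=.
move: Hq HLp Hup.
case: (dqmul (dqmul x q) (dqconj y)) => [[u z2] [v w2]].
move=> Hq HLp Hup Hk2 HCp.
rewrite /dqmul /dqofDC /qofC /qmul /qadd /= in HLp; case: HLp => _ h2 _ h4.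
rewrite /dqmul /dqconj /dqone /qconj /qone /qzero /qmul /qadd /= in Hup; case: Hup => u1 _ u3 _.
rewrite /dqmul /qmul /qadd /= in HCp; case: HCp => _ hc2 _ hc4.
have lnr : l - l^* != 0 by rewrite subr_eq0 eq_sym -CrealE.
have z20 : z2 = 0.
  apply: (mulIf lnr); rewrite mul0r mulrBr.
  by move: h2; zsimp; rewrite (mulrC l) => ->; rewrite subrr.
subst z2.
have w20 : w2 = 0.
  apply: (mulIf lnr); rewrite mul0r mulrBr.
  by move: h4; zsimp; rewrite (mulrC l) => ->; rewrite subrr.
subst w2.
move: u1 u3 hc2 hc4; zsimp => u1 u3 hc2 hc4.
have := @alg u v k2 k4 e2 e4 u1 u3 hc2 hc4 Hk2 => /= -[[Eu Ev]|[Eu Ev]]; rewrite Hq Eu Ev.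
  by left.
right; rewrite -dqNmul -dqmulN.
by rewrite /dqopp /dqofDC /qopp /qofC /= oppr0.
Qed.

Lemma oppsol (a b c d q : dquat R) :
  dq_unit q /\ dqmul a q = dqmul q b /\ dqmul c q = dqmul q d ->
  dq_unit (dqopp q) /\ dqmul a (dqopp q) = dqmul (dqopp q) b /\
  dqmul c (dqopp q) = dqmul (dqopp q) d.
Proof.
case=> [[U1 U2] [E1 E2]]; rewrite /dq_unit dqconjN !dqmulN !dqNmul !dqoppK.
by rewrite U1 U2 E1 E2.
Qed.

Lemma zopp (z : C) : z = - z -> z = 0.
Proof.
move=> H; apply/eqP; have : z * 2 == 0 by rewrite mulrDr mulr1 {1}H addNr.
by rewrite mulf_eq0 pnatr_eq0 orbF.
Qed.

Lemma notopp (q : dquat R) : dq_unit q -> q <> dqopp q.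
Proof.
case: q => [[z1 z2] [z3 z4]] [U1 _] H.
case: H => /zopp h1 /zopp h2 _ _.
move: U1; rewrite h1 h2 /dqmul /dqconj /qmul /qconj /dqone /qone /= => -[].
rewrite !(c0, oppr0, mul0r, mulr0, subrr) => /eqP; rewrite eq_sym oner_eq0 //=.
Qed.
End S.

Theorem theorem3p1 (R : rcfType) (a b c d x y : dquat R) (lam_st lam_inf : R[i]) :
  (exists q : dquat R, dq_unit q /\ dqmul a q = dqmul q b /\ dqmul c q = dqmul q d) ->
  dq_unit x -> dq_unit y ->
  lam_st \notin Num.real ->
  a = dqmul (dqmul (dqconj x) (dqofDC lam_st lam_inf)) x ->
  b = dqmul (dqmul (dqconj y) (dqofDC lam_st lam_inf)) y ->
  let c1 := qc1 (dst (dqmul (dqmul x c) (dqconj x))) in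
  let c2 := qc2 (dst (dqmul (dqmul x c) (dqconj x))) in
  let c3 := qc1 (dinf (dqmul (dqmul x c) (dqconj x))) in
  let c4 := qc2 (dinf (dqmul (dqmul x c) (dqconj x))) in
  let d1 := qc1 (dst (dqmul (dqmul y d) (dqconj y))) in
  let d2 := qc2 (dst (dqmul (dqmul y d) (dqconj y))) in
  let d3 := qc1 (dinf (dqmul (dqmul y d) (dqconj y))) in
  let d4 := qc2 (dinf (dqmul (dqmul y d) (dqconj y))) in
  c2 != 0 ->
  let s := sqrtC (d2 / c2) in
  let q0 := dqmul (dqmul (dqconj x)
              (dqofDC (Num.conj s)
                 ((Num.conj (c2 * d4) - Num.conj (d2 * c4))
                    / (2 * Num.conj c2 ^+ 2) * Num.conj (s^-1)))) y in
  q0 <> dqopp q0 /\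
  (forall q : dquat R,
     (dq_unit q /\ dqmul a q = dqmul q b /\ dqmul c q = dqmul q d) <->
     (q = q0 \/ q = dqopp q0)).
Proof.
move=> [qs Hqs] Ux Uy Hl Ha Hb c1 c2 c3 c4 d1 d2 d3 d4 Hc2 s q0.
have K : forall q, dq_unit q /\ dqmul a q = dqmul q b /\ dqmul c q = dqmul q d ->
    q = q0 \/ q = dqopp q0.
  by move=> q [Uq [E1 E2]]; exact: (@key R _ _ _ _ _ _ _ _ _ Uq E1 E2 Ux Uy Hl Ha Hb Hc2).
have Kqs := K qs Hqs.
split.
  move=> H; apply: (@notopp R qs (proj1 Hqs)).
  case: Kqs => ->; first exact: H.
  by rewrite dqoppK -H.
move=> q; split; first exact: K.
have Hq0 : dq_unit q0 /\ dqmul a q0 = dqmul q0 b /\ dqmul c q0 = dqmul q0 d.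
  case: Kqs => E; first by rewrite -E.
  by rewrite -(@dqoppK R q0) -E; apply: oppsol.
by case=> ->; last apply: oppsol.
Qed.
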